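(* Let $U:\mathbb{R}^d\to\mathbb{R}$ be twice continuously differentiable with $\nabla U(0)=0$ and $\sup_x\|\mathrm{D}^2U(x)\|\le\mathtt{L}$, and assume there exist $\mathtt{m}>0$, $\mathtt{K}\ge0$ with $\mathrm{D}^2U(x)[y,y]\ge\mathtt{m}$ whenever $\|x\|\ge\mathtt{K}$, $\|y\|=1$. Let $\bar\gamma\in(0,\mathtt{m}^3/(4\mathtt{L}^4)]$, $\epsilon=(\mathtt{m}^3/2^4)\{2^{1/2}\mathtt{L}^2+2^{-3/2}\bar\gamma^{1/2}\mathtt{L}^3\}^{-1}$ and $$C_{2,\bar\gamma}=2\mathtt{L}+2^{1/2}\mathtt{L}^2\epsilon^{-1}+(\bar\gamma/2)\mathtt{L}^2+2^{-3/2}\bar\gamma^{3/2}\mathtt{L}^3\epsilon^{-1}.$$ Let $\tilde{\mathtt{K}}=2\mathtt{K}(1+\mathtt{L}/\mathtt{m})$. Then for all $\gamma\in(0,\bar\gamma]$ and $x,z\in\mathbb{R}^d$ with $\|x\|\ge\max(2\mathtt{K},\tilde{\mathtt{K}})$ and $\|z\|\le\|x\|/(4\sqrt{2\gamma})$, $$\tau_\gamma(x,z)\le C_{2,\bar\gamma}\gamma\|z\|^2.$$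
   Context: For $\gamma>0$ and $x,z\in\mathbb{R}^d$, $\tau_\gamma(x,z)=U(x-\gamma\nabla U(x)+\sqrt{2\gamma}z)-U(x)+\frac12\big\{\|z-(\gamma/2)^{1/2}[\nabla U(x)+\nabla U(x-\gamma\nabla U(x)+\sqrt{2\gamma}z)]\|^2-\|z\|^2\big\}$. *)

(* Defs.v *)
From HB Require Import structures.
From mathcomp Require Import all_boot all_order all_algebra.
From mathcomp Require Import all_classical all_reals all_analysis.
Set Implicit Arguments. Unset Strict Implicit. Unset Printing Implicit Defensive.
Import Order.TTheory GRing.Theory Num.Theory.
Import numFieldNormedType.Exports.
Local Open Scope ring_scope.

Section defs.
Variables (R : realType) (d : nat).

Definition dotv (u v : 'rV[R]_d) : R := \sum_(i < d) u ord0 i * v ord0 i.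
Definition enorm (u : 'rV[R]_d) : R := Num.sqrt (dotv u u).

Definition grad (U : 'rV[R]_d -> R) (x : 'rV[R]_d) : 'rV[R]_d :=
  \row_i ('d U x) (delta_mx ord0 i).

Definition hess (U : 'rV[R]_d -> R) (x : 'rV[R]_d) : 'M[R]_d :=
  'J (grad U) x.

Definition hess_form (U : 'rV[R]_d -> R) (x y : 'rV[R]_d) : R :=
  (y *m hess U x *m y^T) ord0 ord0.

Definition opnorm_le (H : 'M[R]_d) (L : R) : Prop :=
  forall w : 'rV[R]_d, enorm (w *m H) <= L * enorm w.

Definition C2 (U : 'rV[R]_d -> R) : Prop :=
  (forall x, differentiable U x) /\
  (forall x, differentiable (grad U) x) /\
  continuous (hess U).

Definition tau (U : 'rV[R]_d -> R) (gamma : R) (x z : 'rV[R]_d) : R :=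
  let y := x - gamma *: grad U x + Num.sqrt (2 * gamma) *: z in
  U y - U x +
  2^-1 * ((enorm (z - Num.sqrt (gamma / 2) *: (grad U x + grad U y))) ^+ 2
          - (enorm z) ^+ 2).

End defs.

(* Main.v *)
Require Import Defs.
From HB Require Import structures.
From mathcomp Require Import all_boot all_order all_algebra.
From mathcomp Require Import all_classical all_reals all_analysis.
From mathcomp Require Import ring lra.
Import Order.TTheory GRing.Theory Num.Theory.
Import numFieldNormedType.Exports.
Local Open Scope ring_scope.
Set Implicit Arguments. Unset Strict Implicit. Unset Printing Implicit Defensive.

Lemma dotvC (R : realType) n (u v : 'rV[R]_n) : dotv u v = dotv v u.
Proof. by apply: eq_bigr => i _; rewrite mulrC. Qed.

Lemma dotvDl (R : realType) n (u w v : 'rV[R]_n) :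
  dotv (u + w) v = dotv u v + dotv w v.
Proof. by rewrite /dotv -big_split; apply: eq_bigr => i _; rewrite !mxE mulrDl. Qed.

Lemma dotvDr (R : realType) n (u w v : 'rV[R]_n) :
  dotv v (u + w) = dotv v u + dotv v w.
Proof. by rewrite dotvC dotvDl !(dotvC v). Qed.

Lemma dotvZl (R : realType) n (k : R) (u v : 'rV[R]_n) :
  dotv (k *: u) v = k * dotv u v.
Proof. by rewrite /dotv mulr_sumr; apply: eq_bigr => i _; rewrite !mxE mulrA. Qed.

Lemma dotvZr (R : realType) n (k : R) (u v : 'rV[R]_n) :
  dotv v (k *: u) = k * dotv v u.
Proof. by rewrite dotvC dotvZl dotvC. Qed.

Lemma dotvNl (R : realType) n (u v : 'rV[R]_n) : dotv (- u) v = - dotv u v.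
Proof. by rewrite -scaleN1r dotvZl mulN1r. Qed.

Lemma dotvNr (R : realType) n (u v : 'rV[R]_n) : dotv v (- u) = - dotv v u.
Proof. by rewrite dotvC dotvNl dotvC. Qed.

Lemma dotv_ge0 (R : realType) n (u : 'rV[R]_n) : 0 <= dotv u u.
Proof. by apply: sumr_ge0 => i _; rewrite -expr2 sqr_ge0. Qed.

Lemma enorm_ge0 (R : realType) n (u : 'rV[R]_n) : 0 <= enorm u.
Proof. exact: sqrtr_ge0. Qed.

Lemma enorm_sq (R : realType) n (u : 'rV[R]_n) : enorm u ^+ 2 = dotv u u.
Proof. by rewrite sqr_sqrtr // dotv_ge0. Qed.

Lemma dotv_CS2 (R : realType) n (u v : 'rV[R]_n) :
  dotv u v ^+ 2 <= dotv u u * dotv v v.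
Proof.
set A := dotv u u; set B := dotv u v; set C := dotv v v.
have hA : 0 <= A by exact: dotv_ge0.
have hC : 0 <= C by exact: dotv_ge0.
have key : forall a b : R, 0 <= a ^+ 2 * A - 2 * a * b * B + b ^+ 2 * C.
  move=> a b; have := dotv_ge0 (a *: u - b *: v).
  rewrite !dotvDl !dotvDr !dotvNl !dotvNr !dotvZl !dotvZr (dotvC v u) -/A -/B -/C.
  by move=> H; apply: le_trans H _; rewrite le_eqVlt; apply/orP; left; apply/eqP; ring.
have [C0|Cpos] := eqVneq C 0.
  have [B0|Bn0] := eqVneq B 0; first by rewrite B0 C0; nra.
  have := key 1 ((A + 1) / (2 * B)).
  rewrite C0 mulr0 addr0 expr1n mul1r mulr1.
  have -> : 2 * ((A + 1) / (2 * B)) * B = A + 1 by field; rewrite Bn0.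
  lra.
have Cp : 0 < C by rewrite lt_def Cpos hC.
have k := key C B.
rewrite -subr_ge0; rewrite -(pmulr_rge0 _ Cp).
apply: le_trans k _; rewrite le_eqVlt; apply/orP; left; apply/eqP; ring.
Qed.

Lemma sq_le (R : realType) (c e : R) : 0 <= e -> c ^+ 2 <= e ^+ 2 -> c <= e.
Proof.
move=> he h; have [//|ce] := lerP c e.
have h1 : 0 < c - e by rewrite subr_gt0.
have h2 : 0 < c + e by apply: lt_le_trans (ltr_wpDr he (le_lt_trans he ce)) _; rewrite addrC.
have := mulr_gt0 h1 h2.
have -> : (c - e) * (c + e) = c ^+ 2 - e ^+ 2 by ring.
lra.
Qed.

Lemma dotv_CS (R : realType) n (u v : 'rV[R]_n) :
  dotv u v <= enorm u * enorm v.
Proof.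
have := dotv_CS2 u v; rewrite -!enorm_sq.
have := enorm_ge0 u; have := enorm_ge0 v.
move: (enorm u) (enorm v) (dotv u v) => a b c ha hb.
rewrite -exprMn; have : 0 <= a * b by exact: mulr_ge0.
move: (a * b) => e he h.
exact: sq_le.
Qed.

Lemma enorm_tri (R : realType) n (u v : 'rV[R]_n) :
  enorm (u + v) <= enorm u + enorm v.
Proof.
apply: sq_le; first by apply: addr_ge0; exact: enorm_ge0.
rewrite enorm_sq dotvDl !dotvDr (dotvC v u) sqrrD -!enorm_sq.
have := dotv_CS u v; lra.
Qed.

Lemma enormZ (R : realType) n (k : R) (u : 'rV[R]_n) :
  enorm (k *: u) = `|k| * enorm u.
Proof.
have h : enorm (k *: u) ^+ 2 = (`|k| * enorm u) ^+ 2.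
  rewrite exprMn real_normK ?num_real // !enorm_sq dotvZl dotvZr mulrA.
  by rewrite -expr2.
have hp : 0 <= `|k| * enorm u by apply: mulr_ge0 => //; exact: enorm_ge0.
apply/le_anti/andP; split; apply: sq_le => //; first by rewrite h.
  exact: enorm_ge0.
by rewrite h.
Qed.

Lemma enormN (R : realType) n (u : 'rV[R]_n) : enorm (- u) = enorm u.
Proof. by rewrite -scaleN1r enormZ normrN normr1 mul1r. Qed.

Lemma hess_formE (R : realType) n (U : 'rV[R]_n -> R) (q y : 'rV[R]_n) :
  hess_form U q y = dotv (y *m hess U q) y.
Proof. rewrite /hess_form /dotv [in LHS]mxE; apply: eq_bigr => j _. by rewrite [y^T _ _]mxE. Qed.
Lemma line_diff (R : realType) (n : nat) (W : normedModType R) (f : 'rV[R]_n -> W) (p h : 'rV[R]_n) (t : R) :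
  differentiable f (p + t *: h) ->
  differentiable (fun s : R => f (p + s *: h)) t /\
  'D_1 (fun s : R => f (p + s *: h)) t = 'D_h f (p + t *: h).
Proof.
move=> df.
have H : is_diff t (cst p + *:%R^~ h : R -> 'rV[R]_n) (0 + *:%R^~ h).
  exact: is_diffD.
have eL : (fun s : R => p + s *: h) = (cst p + *:%R^~ h : R -> 'rV[R]_n) by [].
have dl : differentiable (fun s : R => p + s *: h) t by rewrite eL.
have -> : (fun s : R => f (p + s *: h)) = f \o (fun s : R => p + s *: h) by [].
have dc : differentiable (f \o (fun s : R => p + s *: h)) t.
  exact: differentiable_comp.
split => //.
rewrite deriveE // diff_comp // deriveE //=.
congr ('d f _ _).
rewrite eL diff_val /=.
by rewrite add0r scale1r.
Qed.


Lemma mono01 (R : realType) (f df : R -> R) :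
  (forall t : R, is_derive t (1:R) f (df t)) -> (forall t, 0 < t < 1 -> df t <= 0) ->
  f 1 <= f 0.
Proof.
move=> Hd Hle.
have dv : forall t : R, derivable f t 1 by move=> t; have [] := Hd t.
apply: (@ler0_derive1_le_cc R f 0 1).
- by move=> t _; exact: dv.
- move=> t; rewrite in_itv /= => /andP[t0 t1].
  by rewrite derive1E derive_val; apply: Hle; rewrite t0 t1.
- by apply: derivable_within_continuous => t _; exact: dv.
- by rewrite in_itv /= ler01 lexx.
- by rewrite in_itv /= ler01 lexx.
- exact: ler01.
Qed.

Lemma dgrad (R : realType) (n : nat) (U : 'rV[R]_n -> R) (q v : 'rV[R]_n) :
  'd U q v = dotv (grad U q) v.
Proof.
rewrite {1}(row_sum_delta v) linear_sum /dotv.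
apply: eq_bigr => i _; rewrite linearZ /= mxE mulrC.
by [].
Qed.

Lemma dot_der (R : realType) (n : nat) (M : R -> 'rV[R]_n) (v : 'rV[R]_n) (t : R) (dM : 'rV[R]_n) :
  is_derive t 1 M dM -> is_derive t 1 (fun s => dotv (M s) v) (dotv dM v).
Proof.
move=> HM.
have dM' : derivable M t 1 by case: HM.
have /derivable_mxP dc := dM'.
have E : (fun s => dotv (M s) v) = \sum_(i < n) (v 0 i *: (fun s => M s 0 i)).
  apply/funext => s; rewrite /dotv fct_sumE; apply: eq_bigr => i _.
  by rewrite /= mulrC.
rewrite E; apply: is_derive_sum => i.
have -> : dM 0 i * v 0 i = v 0 i *: 'D_1 (fun s => M s 0 i) t.
  rewrite -(@derive_val _ _ _ _ _ _ _ HM) derive_mx // mxE mulrC //.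
apply: is_deriveZ.
exact: derivableP.
Qed.

Lemma is_derive_comb (R : realType) (f : R -> R) (df a b t : R) :
  is_derive t (1:R) f df ->
  is_derive t (1:R) (fun s => f s + a * s + b * (s * s)) (df + a + b * (2 * t)).
Proof.
move=> Hf.
have H1 : is_derive t (1:R) (a *: (@id R)) (a *: (1:R)) by apply: is_deriveZ.
have H2 : is_derive t (1:R) ((@id R) * (@id R)) (id t *: (1:R) + id t *: (1:R)).
  by apply: is_deriveM.
have H3 : is_derive t (1:R) (b *: ((@id R) * (@id R))) (b *: (id t *: (1:R) + id t *: (1:R))).
  by apply: is_deriveZ.
have H := is_deriveD (is_deriveD Hf H1) H3.
have -> : (fun s => f s + a * s + b * (s * s)) = f + a *: (@id R) + b *: ((@id R) * (@id R)).
  by apply/funext => s.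
apply: is_derive_eq H _.
rewrite /= /GRing.scale /= !mulr1; ring.
Qed.

Lemma phi_der (R : realType) n (U : 'rV[R]_n -> R) (p h : 'rV[R]_n) (t : R) :
  (forall x, differentiable U x) ->
  is_derive t (1:R) (fun s => U (p + s *: h)) (dotv (grad U (p + t *: h)) h).
Proof.
move=> dU; have [d1 e1] := line_diff (dU (p + t *: h)).
apply: DeriveDef; first exact: diff_derivable.
by rewrite e1 deriveE // dgrad.
Qed.

Lemma psi_der (R : realType) n (U : 'rV[R]_n -> R) (p h v : 'rV[R]_n) (t : R) :
  (forall x, differentiable (grad U) x) ->
  is_derive t (1:R) (fun s => dotv (grad U (p + s *: h)) v)
     (dotv (h *m hess U (p + t *: h)) v).
Proof.
move=> dG; apply: dot_der.
have [d1 e1] := line_diff (dG (p + t *: h)).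
apply: DeriveDef; first exact: diff_derivable.
by rewrite e1 deriveEjacobian.
Qed.

Lemma mono01' (R : realType) (f df : R -> R) :
  (forall t : R, is_derive t (1:R) f (df t)) -> (forall t, 0 < t < 1 -> 0 <= df t) ->
  f 0 <= f 1.
Proof.
move=> Hd Hge.
have := @mono01 R (- f) (fun t => - df t).
rewrite /= lerN2; apply; last first.
by move=> t /Hge; rewrite oppr_le0.
Qed.


Lemma tA (R : realType) n (U : 'rV[R]_n -> R) (c : R) (p h v : 'rV[R]_n) :
  (forall x, differentiable (grad U) x) ->
  forall t : R, is_derive t (1:R) (fun s => dotv (grad U (p + s *: h)) v + (- c) * s + 0 * (s * s))
  (dotv (h *m hess U (p + t *: h)) v + (- c) + 0 * (2 * t)).
Proof.
move=> dG t.
exact: (is_derive_comb _ _ (psi_der p h v t dG)).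
Qed.
Lemma tB (R : realType) n (U : 'rV[R]_n -> R) (L : R) (p h v : 'rV[R]_n) :
  (forall x, opnorm_le (hess U x) L) ->
  forall t : R, 0 < t < 1 -> dotv (h *m hess U (p + t *: h)) v + (- (L * enorm h * enorm v)) + 0 * (2 * t) <= 0.
Proof.
move=> HL t _.
have : dotv (h *m hess U (p + t *: h)) v <= L * enorm h * enorm v.
    apply: le_trans (dotv_CS _ _) _.
    apply: ler_wpM2r; first exact: enorm_ge0.
    exact: HL.
move: (dotv _ _) (L * _ * _) => a b.
lra.
Qed.

Lemma g3 (R : realType) (a b c : R) :
  a + - c * 1 + 0 * (1 * 1) <= b + - c * 0 + 0 * (0 * 0) -> a - b <= c.
Proof. lra. Qed.

Lemma gradlip (R : realType) n (U : 'rV[R]_n -> R) (L : R) (p h v : 'rV[R]_n) :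
  (forall x, differentiable (grad U) x) ->
  (forall x, opnorm_le (hess U x) L) ->
  dotv (grad U (p + h)) v - dotv (grad U p) v <= L * enorm h * enorm v.
Proof.
move=> dG HL.
have H := g3 (@mono01 R _ _ (tA (L * enorm h * enorm v) p h v dG) (tB p h v HL)).
rewrite /= scale1r scale0r addr0 in H.
exact H.
Qed.

Lemma enorm_eq0 (R : realType) n (h : 'rV[R]_n) : enorm h = 0 -> h = 0.
Proof.
move=> H; have : dotv h h = 0 by rewrite -enorm_sq H expr0n.
move/psumr_eq0P => H2; apply/rowP => i; rewrite mxE.
have H3 := H2 (fun j _ => ltac:(by rewrite -expr2 sqr_ge0)) i isT.
by move: H3; rewrite -expr2 => /eqP; rewrite sqrf_eq0 => /eqP ->.
Qed.

Lemma aux_div (R : realType) (m r D : R) : 0 < r -> m <= r^-1 * (r^-1 * D) -> m * r ^+ 2 <= D.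
Proof.
move=> rp H.
have -> : D = r ^+ 2 * (r^-1 * (r^-1 * D)) by field; rewrite gt_eqF.
rewrite mulrC; apply: ler_wpM2l => //; exact: sqr_ge0.
Qed.

Lemma hess_lb (R : realType) n (U : 'rV[R]_n -> R) (m K : R) (q h : 'rV[R]_n) :
  (forall x y : 'rV[R]_n, K <= enorm x -> enorm y = 1 -> m <= hess_form U x y) ->
  K <= enorm q -> m * enorm h ^+ 2 <= hess_form U q h.
Proof.
move=> Hm Kq.
have [r0|rpos] := eqVneq (enorm h) 0.
  rewrite (enorm_eq0 r0) hess_formE mul0mx /dotv big1 => [|i _]; last by rewrite mxE mul0r.
  by rewrite /enorm /dotv big1 => [|i _]; rewrite ?mxE ?mul0r // sqrtr0 expr0n mulr0.
have rp : 0 < enorm h by rewrite lt_def rpos enorm_ge0.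
have hy : enorm ((enorm h)^-1 *: h) = 1.
  by rewrite enormZ ger0_norm ?invr_ge0 ?(ltW rp) // mulVf.
have := Hm q _ Kq hy.
rewrite !hess_formE -scalemxAl dotvZl dotvZr.
exact: aux_div.
Qed.

Lemma g4 (R : realType) (a b M : R) :
  a + - M * 0 + 0 * (0 * 0) <= b + - M * 1 + 0 * (1 * 1) -> a <= b - M.
Proof. lra. Qed.

Lemma g5 (R : realType) (D M t u m e : R) :
  (1 - t) * (m * e) <= (1 - t) * D -> M = m * e * (1 - t) -> 0 <= (1 - t) * D + - M + 0 * (2 * u).
Proof. move=> H ->. lra. Qed.

Lemma g6 (R : realType) (t u : R) : 0 < t -> t < 1 -> 0 < u -> u < 1 -> t + u * (1 - t) <= 1.
Proof. nra. Qed.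

Lemma seg_pt (R : realType) n (p h : 'rV[R]_n) (t u : R) :
  p + t *: h + u *: ((1 - t) *: h) = p + (t + u * (1 - t)) *: h.
Proof. by rewrite scalerA -addrA -scalerDl. Qed.

Lemma stepB (R : realType) n (U : 'rV[R]_n -> R) (m K : R) (p h : 'rV[R]_n) (t : R) :
  (forall x, differentiable (grad U) x) ->
  (forall x y : 'rV[R]_n, K <= enorm x -> enorm y = 1 -> m <= hess_form U x y) ->
  (forall s, 0 <= s -> s <= 1 -> K <= enorm (p + s *: h)) ->
  0 < t -> t < 1 ->
  dotv (grad U (p + t *: h)) h <= dotv (grad U (p + h)) h - m * enorm h ^+ 2 * (1 - t).
Proof.
move=> dG Hm Hseg t0 t1.
have H := @mono01' R
  (fun u => dotv (grad U (p + t *: h + u *: ((1 - t) *: h))) h + (- (m * enorm h ^+ 2 * (1 - t))) * u + 0 * (u * u))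
  (fun u => dotv (((1 - t) *: h) *m hess U (p + t *: h + u *: ((1 - t) *: h))) h + (- (m * enorm h ^+ 2 * (1 - t))) + 0 * (2 * u))
  (fun u => is_derive_comb _ _ (psi_der (p + t *: h) ((1 - t) *: h) h u dG)).
have H2 := g4 (H _).
rewrite !seg_pt mul0r addr0 mul1r [t + _]addrC subrK scale1r in H2.
apply: H2.
move=> u /andP[u0 u1].
rewrite -scalemxAl dotvZl -hess_formE.
apply: g5 => //.
apply: ler_wpM2l; first by rewrite subr_ge0 ltW.
apply: hess_lb Hm _.
rewrite seg_pt; apply: Hseg.
  by apply: addr_ge0; [exact: ltW | apply: mulr_ge0; rewrite ?subr_ge0 ltW].
exact: g6.
Qed.

Lemma g7 (R : realType) (a c M t : R) :
  a <= c - M * (1 - t) -> a + (M - c) + (- (M / 2)) * (2 * t) <= 0.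
Proof. lra. Qed.

Lemma g8 (R : realType) (a b c m e : R) :
  a + (m * e - c) * 1 + (- (m * e / 2)) * (1 * 1) <=
  b + (m * e - c) * 0 + (- (m * e / 2)) * (0 * 0) -> a - b - c <= - (m / 2) * e.
Proof. lra. Qed.

Lemma convU (R : realType) n (U : 'rV[R]_n -> R) (m K : R) (p h : 'rV[R]_n) :
  (forall x, differentiable U x) ->
  (forall x, differentiable (grad U) x) ->
  (forall x y : 'rV[R]_n, K <= enorm x -> enorm y = 1 -> m <= hess_form U x y) ->
  (forall s, 0 <= s -> s <= 1 -> K <= enorm (p + s *: h)) ->
  U (p + h) - U p - dotv (grad U (p + h)) h <= - (m / 2) * enorm h ^+ 2.
Proof.
move=> dU dG Hm Hseg.
have H := @mono01 R
  (fun s => U (p + s *: h) + (m * enorm h ^+ 2 - dotv (grad U (p + h)) h) * s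
            + (- (m * enorm h ^+ 2 / 2)) * (s * s))
  (fun t => dotv (grad U (p + t *: h)) h + (m * enorm h ^+ 2 - dotv (grad U (p + h)) h)
            + (- (m * enorm h ^+ 2 / 2)) * (2 * t))
  (fun t => is_derive_comb _ _ (phi_der p h t dU)).
have H2 := g8 (H _).
rewrite scale1r scale0r addr0 in H2.
apply: H2 => t /andP[t0 t1].
apply: g7.
exact: (stepB dG Hm Hseg t0 t1).
Qed.

Lemma tau_ident (R : realType) n (z a b : 'rV[R]_n) (c : R) :
  2^-1 * (dotv (z - c *: (a + b)) (z - c *: (a + b)) - dotv z z)
  + dotv b (- ((2 * c ^+ 2) *: a) + (2 * c) *: z)
  = c * dotv z (b - a) + (2 * c ^+ 2) / 4 * dotv (b - a) (b - a).
Proof.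
rewrite /dotv -sumrB !mulr_sumr -!big_split /=.
apply: eq_bigr => i _; by rewrite !mxE; field.
Qed.

Lemma fin1 (R : realType) (E D H W Z c g m L C : R) :
  E <= - (m / 2) * H ^+ 2 -> D <= Z * W -> W <= L * H -> 0 <= W -> 0 <= H -> 0 <= Z ->
  0 <= c -> g = 2 * c ^+ 2 -> 4 * g * L ^+ 2 <= m -> 0 < m -> L ^+ 2 / m <= C -> 0 < g ->
  E + c * D + g / 4 * W ^+ 2 <= C * g * Z ^+ 2.
Proof.
move=> hE hD hW W0 H0 Z0 c0 hg hL m0 hC g0.
have s1 : c * D <= c * (Z * (L * H)).
  apply: ler_wpM2l => //; apply: le_trans hD _; apply: ler_wpM2l => //.
have s3 : W ^+ 2 <= (L * H) ^+ 2 by rewrite ler_sqr // nnegrE; apply: le_trans hW.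
have s4 : g / 4 * W ^+ 2 <= m / 16 * H ^+ 2.
  apply: le_trans (ler_wpM2l _ s3) _; first by apply: divr_ge0; [exact: ltW|].
  rewrite exprMn.
  have : 0 <= H ^+ 2 by exact: sqr_ge0.
  move: (H ^+ 2) => h2 h20; nra.
have s5 : - (m / 2) * H ^+ 2 + c * (Z * (L * H)) + m / 16 * H ^+ 2 <= L ^+ 2 / m * g * Z ^+ 2.
  rewrite hg.
  have hsq : 0 <= (c * L * Z - m * H / 2) ^+ 2 by exact: sqr_ge0.
  rewrite -subr_ge0.
  have -> : L ^+ 2 / m * (2 * c ^+ 2) * Z ^+ 2 - (- (m / 2) * H ^+ 2 + c * (Z * (L * H)) + m / 16 * H ^+ 2)
     = m^-1 * ((c * L * Z - m * H / 2) ^+ 2 + (c * L * Z) ^+ 2 + 3 / 16 * (m * H) ^+ 2).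
    by field; rewrite gt_eqF.
  apply: mulr_ge0; first by rewrite invr_ge0 ltW.
  apply: addr_ge0; first by apply: addr_ge0 => //; exact: sqr_ge0.
  by apply: mulr_ge0; [| exact: sqr_ge0].
have s6 : L ^+ 2 / m * g * Z ^+ 2 <= C * g * Z ^+ 2.
  apply: ler_wpM2r; first exact: sqr_ge0.
  by apply: ler_wpM2r => //; exact: ltW.
lra.
Qed.

Lemma fin2 (R : realType) (m L g gb : R) :
  0 < m -> m <= L -> 0 < g -> g <= gb -> gb <= m ^+ 3 / (4 * L ^+ 4) ->
  4 * g * L <= 1 /\ 4 * g * L ^+ 2 <= m.
Proof.
move=> m0 mL g0 ggb gbm.
have L0 : 0 < L by apply: lt_le_trans mL.
have h1 : g * (4 * L ^+ 4) <= m ^+ 3.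
  by rewrite -ler_pdivlMr ?mulr_gt0 ?exprn_gt0 //; apply: le_trans gbm.
have m3 : m ^+ 3 <= L ^+ 3 by rewrite ler_pXn2r // nnegrE ltW // (lt_le_trans m0).
have m2 : m * m ^+ 2 <= m * L ^+ 2.
  by apply: ler_wpM2l; [exact: ltW | rewrite ler_pXn2r // nnegrE ltW // (lt_le_trans m0)].
split.
  have : (4 * g * L) * L ^+ 3 <= 1 * L ^+ 3.
    rewrite mul1r; apply: le_trans m3; apply: le_trans h1; rewrite le_eqVlt; apply/orP; left; apply/eqP; ring.
  by rewrite ler_pM2r // exprn_gt0.
have : (4 * g * L ^+ 2) * L ^+ 2 <= m * L ^+ 2.
  apply: le_trans m2; rewrite -exprS; apply: le_trans h1; rewrite le_eqVlt; apply/orP; left; apply/eqP; ring.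
by rewrite ler_pM2r // exprn_gt0.
Qed.

Lemma fin3 (R : realType) (m L gb r2 sg eps : R) :
  0 < m -> m <= L -> 0 < gb -> 0 < r2 -> r2 ^+ 2 = 2 -> 0 <= sg ->
  eps = (m ^+ 3 / 2 ^+ 4) *
     (r2 * L ^+ 2 + (r2 ^+ 3)^-1 * sg * L ^+ 3)^-1 ->
  L ^+ 2 / m <= 2 * L + r2 * L ^+ 2 / eps + (gb / 2) * L ^+ 2
     + (r2 ^+ 3)^-1 * (sg ^+ 3) * L ^+ 3 / eps.
Proof.
move=> m0 mL gb0 r0 r2E sg0 epsE.
have L0 : 0 < L by apply: lt_le_trans mL.
set Q := r2 * L ^+ 2 + (r2 ^+ 3)^-1 * sg * L ^+ 3.
have Q1 : r2 * L ^+ 2 <= Q.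
  rewrite /Q lerDl; apply: mulr_ge0; last by rewrite ltW // exprn_gt0.
  by apply: mulr_ge0 => //; rewrite invr_ge0 ltW // exprn_gt0.
have Q0 : 0 < Q by apply: lt_le_trans Q1; rewrite mulr_gt0 // exprn_gt0.
have e0 : 0 < eps by rewrite epsE mulr_gt0 // ?invr_gt0 // divr_gt0 // exprn_gt0.
have t1 : 0 <= 2 * L by rewrite mulr_ge0 // ltW.
have t3 : 0 <= gb / 2 * L ^+ 2 by rewrite mulr_ge0 ?divr_ge0 ?ltW // exprn_gt0.
have t4 : 0 <= (r2 ^+ 3)^-1 * sg ^+ 3 * L ^+ 3 / eps.
  apply: divr_ge0; last exact: ltW.
  apply: mulr_ge0; last exact: exprn_ge0 (ltW L0).
  apply: mulr_ge0; last exact: exprn_ge0.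
  by rewrite invr_ge0; exact: exprn_ge0 (ltW r0).
have t2 : L ^+ 2 / m <= r2 * L ^+ 2 / eps.
  have -> : r2 * L ^+ 2 / eps = 16 * (r2 * L ^+ 2) * Q / m ^+ 3.
    rewrite epsE -/Q; field.
    by rewrite !gt_eqF ?exprn_gt0.
  have A : 16 * (r2 * L ^+ 2) * (r2 * L ^+ 2) <= 16 * (r2 * L ^+ 2) * Q.
    by apply: ler_wpM2l => //; rewrite mulr_ge0 // mulr_ge0 ?ltW // exprn_gt0.
  have B : 16 * (r2 * L ^+ 2) * (r2 * L ^+ 2) = 32 * L ^+ 4.
    by rewrite -mulrA -expr2 exprMn r2E; ring.
  rewrite B in A.
  apply: (@le_trans _ _ (32 * L ^+ 4 / m ^+ 3)); last first.
    by apply: ler_wpM2r => //; rewrite invr_ge0 exprn_ge0 // ltW.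
  rewrite -subr_ge0.
  have -> : 32 * L ^+ 4 / m ^+ 3 - L ^+ 2 / m = L ^+ 2 * (32 * L ^+ 2 - m ^+ 2) / m ^+ 3.
    by field; rewrite gt_eqF.
  apply: divr_ge0; last exact: exprn_ge0 (ltW m0).
  apply: mulr_ge0; first exact: sqr_ge0.
  have : m ^+ 2 <= L ^+ 2 by rewrite ler_pXn2r // nnegrE ltW.
  have : 0 <= L ^+ 2 by exact: sqr_ge0.
  move: (L ^+ 2) (m ^+ 2) => a b; lra.
lra.
Qed.

Lemma fin4 (R : realType) (a b : R) : 0 <= a -> 0 <= b -> a ^+ 2 <= b * a -> a <= b.
Proof. move=> a0 b0 h; nra. Qed.

Lemma fin5 (R : realType) (a X Y Z : R) : X + Y = Z -> a + X = a - Y + Z.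
Proof. move=> <-; ring. Qed.

Lemma dotv0l (R : realType) n (v : 'rV[R]_n) : dotv 0 v = 0.
Proof. by rewrite /dotv big1 // => i _; rewrite mxE mul0r. Qed.

Lemma unit_vec (R : realType) n (i : 'I_n) : enorm (delta_mx 0 i : 'rV[R]_n) = 1.
Proof.
rewrite /enorm /dotv (bigD1 i) //= big1 => [|j ji]; last by rewrite !mxE (negbTE ji) mulr0.
by rewrite !mxE eqxx /= mulr1 addr0 sqrtr1.
Qed.

Lemma mL_le (R : realType) n (U : 'rV[R]_n -> R) (L m K : R) (x e : 'rV[R]_n) :
  (forall x, opnorm_le (hess U x) L) ->
  (forall x y : 'rV[R]_n, K <= enorm x -> enorm y = 1 -> m <= hess_form U x y) ->
  K <= enorm x -> enorm e = 1 -> m <= L.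
Proof.
move=> HL Hm Kx e1.
apply: le_trans (Hm x e Kx e1) _.
rewrite hess_formE; apply: le_trans (dotv_CS _ _) _.
rewrite e1 mulr1; have := HL x e; rewrite e1 mulr1; exact.
Qed.

Lemma seg_ok (R : realType) n (x h : 'rV[R]_n) (K s : R) :
  2 * K <= enorm x -> enorm h <= enorm x / 2 -> 0 <= s -> s <= 1 -> K <= enorm (x + s *: h).
Proof.
move=> Kx hx s0 s1.
have T := enorm_tri (x + s *: h) (- (s *: h)).
rewrite addrK enormN enormZ ger0_norm // in T.
have : s * enorm h <= enorm h by rewrite ler_piMl // enorm_ge0.
lra.
Qed.

Lemma fin6 (R : realType) (g L X : R) : 0 <= X -> 0 < g -> 4 * g * L <= 1 -> g * (L * X) <= X / 4.
Proof. move=> X0 g0 h; nra. Qed.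

Lemma fin7 (R : realType) (a X Y Z1 Z2 : R) : X + Y = Z1 + Z2 -> a + X = a - Y + Z1 + Z2.
Proof. move=> H; have -> : a - Y + Z1 + Z2 = a - Y + (Z1 + Z2) by ring. rewrite -H; ring. Qed.

Lemma fin8 (R : realType) (s Z X : R) : 0 < s -> Z <= X / (4 * s) -> s * Z <= X / 4.
Proof.
move=> s0 h.
have -> : X / 4 = s * (X / (4 * s)) by field; rewrite gt_eqF.
by apply: ler_wpM2l => //; exact: ltW.
Qed.

Lemma fin9 (R : realType) (a b c d e : R) : a <= b + c -> b <= d -> c <= e -> d <= e -> e + e = 2 * e -> a <= 2 * e.
Proof. lra. Qed.

Lemma tau_ident2 (R : realType) n (z a b : 'rV[R]_n) (c g s : R) :
  g = 2 * c ^+ 2 -> s = 2 * c ->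
  2^-1 * (dotv (z - c *: (a + b)) (z - c *: (a + b)) - dotv z z)
  + dotv b (- (g *: a) + s *: z)
  = c * dotv z (b - a) + g / 4 * dotv (b - a) (b - a).
Proof. move=> -> ->; exact: tau_ident. Qed.

Unset Implicit Arguments. Set Strict Implicit.

Theorem lemma2 (R : realType) (d : nat) (U : 'rV[R]_d -> R) (L m K gbar : R) :
  C2 U ->
  grad U 0 = 0 ->
  (forall x, opnorm_le (hess U x) L) ->
  0 < m -> 0 <= K ->
  (forall x y : 'rV[R]_d, K <= enorm x -> enorm y = 1 -> m <= hess_form U x y) ->
  0 < gbar -> gbar <= m ^+ 3 / (4 * L ^+ 4) ->
  let eps := (m ^+ 3 / 2 ^+ 4) *
     (Num.sqrt 2 * L ^+ 2 + (Num.sqrt 2 ^+ 3)^-1 * Num.sqrt gbar * L ^+ 3)^-1 in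
  let C2g := 2 * L + Num.sqrt 2 * L ^+ 2 / eps + (gbar / 2) * L ^+ 2
     + (Num.sqrt 2 ^+ 3)^-1 * (Num.sqrt gbar ^+ 3) * L ^+ 3 / eps in
  let Kt := 2 * K * (1 + L / m) in
  forall (gamma : R) (x z : 'rV[R]_d),
    0 < gamma -> gamma <= gbar ->
    Num.max (2 * K) Kt <= enorm x ->
    enorm z <= enorm x / (4 * Num.sqrt (2 * gamma)) ->
    tau U gamma x z <= C2g * gamma * (enorm z) ^+ 2.
Proof.
move=> [dU [dG _]] G0 HL m0 K0 Hm gb0 gbm eps C2g Kt gamma x z g0 ggb Hx Hz.
rewrite ge_max in Hx; case/andP: Hx => Kx _.
have Kx1 : K <= enorm x by apply: le_trans Kx; lra.
have [d0|dpos] := posnP d.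
  subst d.
  have E0 : forall u : 'rV[R]_0, enorm u = 0.
    by move=> u; rewrite /enorm /dotv big_ord0 sqrtr0.
  rewrite /tau /= !E0 expr0n /= mulr0 subrr mulr0 addr0.
  rewrite [x - _ + _]thinmx0 [x]thinmx0 subrr lexx //.
have mL : m <= L := mL_le HL Hm Kx1 (unit_vec R (Ordinal dpos)).
have [gL1 gL2] := fin2 m0 mL g0 ggb gbm.
have L0 : 0 < L by apply: lt_le_trans mL.
set gx := grad U x.
set s0 := Num.sqrt (2 * gamma).
set c := Num.sqrt (gamma / 2).
set h := - (gamma *: gx) + s0 *: z.
have hy : x - gamma *: gx + s0 *: z = x + h by rewrite addrA.
have c0 : 0 <= c by exact: sqrtr_ge0.
have c2 : c ^+ 2 = gamma / 2 by rewrite sqr_sqrtr // divr_ge0 // ltW.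
have s0p : 0 < s0 by rewrite sqrtr_gt0 mulr_gt0.
have s02 : s0 ^+ 2 = 2 * gamma by rewrite sqr_sqrtr // mulr_ge0 // ltW.
have s0E : s0 = 2 * c.
  apply/le_anti/andP; split; apply: sq_le; rewrite ?mulr_ge0 ?(ltW s0p) //.
    by rewrite exprMn c2 s02; lra.
  by rewrite exprMn c2 s02; lra.
have gE : gamma = 2 * c ^+ 2 by rewrite c2; lra.
have Rg : enorm gx <= L * enorm x.
  have H := gradlip 0 x gx dG HL.
  rewrite add0r G0 dotv0l subr0 -/gx -enorm_sq in H.
  apply: fin4; first exact: enorm_ge0.
    by apply: mulr_ge0; [exact: ltW | exact: enorm_ge0].
  exact H.
have Rh : enorm h <= gamma * enorm gx + s0 * enorm z.
  apply: le_trans (enorm_tri _ _) _.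
  by rewrite enormN !enormZ !ger0_norm ?(ltW g0) ?(ltW s0p).
have Rz : s0 * enorm z <= enorm x / 4 by exact: fin8.
have Rgx : gamma * enorm gx <= enorm x / 4.
  apply: le_trans (fin6 (enorm_ge0 x) g0 gL1).
  by apply: ler_wpM2l => //; exact: ltW.
have Rh2 : enorm h <= enorm x / 2.
  have -> : enorm x / 2 = enorm x / 4 + enorm x / 4 by field.
  by apply: le_trans Rh _; apply: lerD.
have Hseg : forall s, 0 <= s -> s <= 1 -> K <= enorm (x + s *: h).
  by move=> s s0' s1; exact: seg_ok Kx Rh2 s0' s1.
have Cv := convU dU dG Hm Hseg.
set gy := grad U (x + h) in Cv *.
set w := gy - gx.
have Rw : enorm w <= L * enorm h.
  have H := gradlip x h w dG HL.
  rewrite -/gy in H.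
  have E : dotv w w = dotv gy w - dotv gx w by rewrite /w dotvDl dotvNl.
  rewrite -E -enorm_sq in H.
  apply: fin4 H; first exact: enorm_ge0.
  by apply: mulr_ge0; [exact: ltW | exact: enorm_ge0].
have CSw := dotv_CS z w.
have I := tau_ident2 z gx gy gE s0E.
have Etau : tau U gamma x z =
   U (x + h) - U x - dotv gy h + c * dotv z w + gamma / 4 * enorm w ^+ 2.
  rewrite /tau /= hy !enorm_sq.
  exact: fin7 I.
rewrite Etau.
have r2p : 0 < Num.sqrt (2:R) by rewrite sqrtr_gt0 ltr0n.
have r2s : Num.sqrt (2:R) ^+ 2 = 2 by rewrite sqr_sqrtr // ler0n.
have hC : L ^+ 2 / m <= C2g.
  exact: (fin3 m0 mL gb0 r2p r2s (sqrtr_ge0 gbar) erefl).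
exact: (fin1 Cv CSw Rw (enorm_ge0 w) (enorm_ge0 h) (enorm_ge0 z) c0 gE gL2 m0 hC g0).
Qed.
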